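(* Let $A$ be a unital associative $\Bbbk$-algebra, $a\in Z(A)$, $\sigma\in Aut(A)$, and $W_{a,\sigma}$ the generalized Weyl algebra. Let $S\subseteq Z(A)$ be the set of elements $\sigma^n(a^m)$ with $n\in\mathbb{Z}$, $m\in\mathbb{N}$, and let $(W_{a,\sigma})_S$ be the localization of $W_{a,\sigma}$ at $S$. Let $V$ be an arbitrary (right) $W_{a,\sigma}$-module and $h=ht_{a,\sigma}(V)$. Then $V_S:=V\otimes_{W_{a,\sigma}}(W_{a,\sigma})_S$ is isomorphic to $(V/V^{[h]})_S$.
   Context: The generalized Weyl algebra $W_{a,\sigma}$ is the algebra generated by $A$ and indeterminates $x,y$ with relations $yx=a$, $xy=\sigma(a)$, $xu=\sigma(u)x$, $y\sigma(u)=uy$ for $u\in A$. For a right $W_{a,\sigma}$-module $V$ and $\ell\in\mathbb{N}$, set $V^{[\ell]}=\{v\in V : v\triangleleft a\sigma^{-1}(a)\cdots\sigma^{-\ell}(a)=0\}$, and $V^{[\infty]}=\bigcup_{\ell\geq 0}V^{[\ell]}$. The height $ht_{a,\sigma}(V)$ is the smallest integer $\ell$ with $V^{[\ell]}=V^{[\infty]}$, and $\infty$ if no such integer exists (in which case $V^{[h]}$ means $V^{[\infty]}$). For a $W_{a,\sigma}$-module $U$, $U_S:=U\otimes_{W_{a,\sigma}}(W_{a,\sigma})_S$. *)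

(* Defs.v *)
From HB Require Import structures.
From mathcomp Require Import all_boot all_order all_algebra.
Set Implicit Arguments. Unset Strict Implicit. Unset Printing Implicit Defensive.
Import Order.TTheory GRing.Theory Num.Theory.
Local Open Scope ring_scope.

(* Unital ring morphism (f 0 = 0 follows from additivity). *)
Definition rmorph_prop (R S : pzRingType) (f : R -> S) : Prop :=
  (forall u v, f (u + v) = f u + f v) /\
  (forall u v, f (u * v) = f u * f v) /\ f 1 = 1.

Definition additive_prop (U V : zmodType) (f : U -> V) : Prop :=
  forall u v, f (u + v) = f u + f v.

Definition rmodule_prop (R : pzRingType) (V : zmodType) (act : V -> R -> V) : Prop :=
  (forall v, act v 1 = v) /\
  (forall v r s, act v (r * s) = act (act v r) s) /\
  (forall v w r, act (v + w) r = act v r + act w r) /\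
  (forall v r s, act v (r + s) = act v r + act v s).

Definition central (A : pzRingType) (a : A) : Prop := forall u, a * u = u * a.

Definition kalg_structure (k : fieldType) (A : pzRingType) (eta : k -> A) : Prop :=
  rmorph_prop eta /\ forall c, central (eta c).

Definition kalg_aut (k : fieldType) (A : pzRingType) (eta : k -> A)
  (sigma sigma' : A -> A) : Prop :=
  rmorph_prop sigma /\ (forall c, sigma (eta c) = eta c) /\
  cancel sigma sigma' /\ cancel sigma' sigma.

Definition zpow_fun (A : Type) (sigma sigma' : A -> A) (n : int) (u : A) : A :=
  match n with
  | Posz m => iter m sigma u
  | Negz m => iter m.+1 sigma' u
  end.

(* W (with iota : A -> W and x, y) is the generalized Weyl algebra W_{a,sigma}:
   the ring generated by A and x, y subject to
   y x = a, x y = sigma(a), x u = sigma(u) x, y sigma(u) = u y,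
   i.e. it satisfies the universal property of this presentation. *)
Definition is_GWA (A W : pzRingType) (a : A) (sigma : A -> A)
  (iota : A -> W) (x y : W) : Prop :=
  rmorph_prop iota /\
  y * x = iota a /\ x * y = iota (sigma a) /\
  (forall u, x * iota u = iota (sigma u) * x) /\
  (forall u, y * iota (sigma u) = iota u * y) /\
  forall (R : pzRingType) (f : A -> R) (X Y : R),
    rmorph_prop f -> Y * X = f a -> X * Y = f (sigma a) ->
    (forall u, X * f u = f (sigma u) * X) ->
    (forall u, Y * f (sigma u) = f u * Y) ->
    exists g : W -> R,
      [/\ rmorph_prop g, (forall u, g (iota u) = f u), g x = X, g y = Y &
        forall g' : W -> R, rmorph_prop g' -> (forall u, g' (iota u) = f u) ->
          g' x = X -> g' y = Y -> forall w, g' w = g w].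

Definition inverts (W R : pzRingType) (P : W -> Prop) (psi : W -> R) : Prop :=
  forall s, P s -> exists t, psi s * t = 1 /\ t * psi s = 1.

Definition is_localization (W WS : pzRingType) (P : W -> Prop) (phi : W -> WS) : Prop :=
  rmorph_prop phi /\ inverts P phi /\
  forall (R : pzRingType) (psi : W -> R), rmorph_prop psi -> inverts P psi ->
    exists chi : WS -> R,
      [/\ rmorph_prop chi, (forall w, chi (phi w) = psi w) &
        forall chi' : WS -> R, rmorph_prop chi' -> (forall w, chi' (phi w) = psi w) ->
          forall z, chi' z = chi z].

Definition balanced (W WS : pzRingType) (phi : W -> WS) (V : zmodType)
  (actV : V -> W -> V) (G : zmodType) (beta : V -> WS -> G) : Prop :=
  (forall v v' s, beta (v + v') s = beta v s + beta v' s) /\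
  (forall v s s', beta v (s + s') = beta v s + beta v s') /\
  (forall v w s, beta (actV v w) s = beta v (phi w * s)).

Definition is_tensor (W WS : pzRingType) (phi : W -> WS) (V : zmodType)
  (actV : V -> W -> V) (T : zmodType) (tau : V -> WS -> T)
  (actT : T -> WS -> T) : Prop :=
  [/\ rmodule_prop actT, balanced phi actV tau,
    (forall v s s', actT (tau v s) s' = tau v (s * s')) &
    forall (G : zmodType) (beta : V -> WS -> G), balanced phi actV beta ->
      exists g : T -> G,
        [/\ additive_prop g, (forall v s, g (tau v s) = beta v s) &
          forall g' : T -> G, additive_prop g' -> (forall v s, g' (tau v s) = beta v s) ->
            forall t, g' t = g t]].

Definition Vlevel (A W : pzRingType) (iota : A -> W) (a : A) (sigma' : A -> A)
  (V : zmodType) (actV : V -> W -> V) (l : nat) (v : V) : Prop :=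
  actV v (iota (\prod_(i < l.+1) iter i sigma' a)) = 0.

Definition Vinf (A W : pzRingType) (iota : A -> W) (a : A) (sigma' : A -> A)
  (V : zmodType) (actV : V -> W -> V) (v : V) : Prop :=
  exists l, Vlevel iota a sigma' actV l v.

Definition is_height (A W : pzRingType) (iota : A -> W) (a : A) (sigma' : A -> A)
  (V : zmodType) (actV : V -> W -> V) (l : nat) : Prop :=
  (forall v, Vlevel iota a sigma' actV l v <-> Vinf iota a sigma' actV v) /\
  forall l', (forall v, Vlevel iota a sigma' actV l' v <-> Vinf iota a sigma' actV v) ->
    (l <= l')%N.

(* V^{[h]} with h = ht_{a,sigma}(V); V^{[infinity]} when the height is infinite *)
Definition Vheight (A W : pzRingType) (iota : A -> W) (a : A) (sigma' : A -> A)
  (V : zmodType) (actV : V -> W -> V) (v : V) : Prop :=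
  (exists l, is_height iota a sigma' actV l /\ Vlevel iota a sigma' actV l v) \/
  ((forall l, ~ is_height iota a sigma' actV l) /\ Vinf iota a sigma' actV v).

Definition is_quotient (W : pzRingType) (V : zmodType) (actV : V -> W -> V)
  (P : V -> Prop) (Q : zmodType) (actQ : Q -> W -> Q) (pi : V -> Q) : Prop :=
  [/\ rmodule_prop actQ, additive_prop pi,
    (forall v w, pi (actV v w) = actQ (pi v) w),
    (forall q, exists v, pi v = q) &
    (forall v, pi v = 0 <-> P v)].

(* Main.v *)
Require Import Defs.
From HB Require Import structures.
From mathcomp Require Import all_boot all_order all_algebra.
From Stdlib Require Import ClassicalEpsilon.
Import GRing.Theory.
Local Open Scope ring_scope.

Lemma add_0 {U V : zmodType} {f : U -> V} : additive_prop f -> f 0 = 0.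
Proof.
move=> h; have := h 0 0; rewrite addr0 => e.
by apply: (@addrI _ (f 0)); rewrite addr0 -e.
Qed.

Lemma add_N {U V : zmodType} {f : U -> V} : additive_prop f -> forall u, f (- u) = - f u.
Proof.
move=> h u; have := h u (- u); rewrite subrr (add_0 h) => e.
by apply: (@addrI _ (f u)); rewrite -e subrr.
Qed.

Lemma add_B {U V : zmodType} {f : U -> V} : additive_prop f -> forall u v, f (u - v) = f u - f v.
Proof. by move=> h u v; rewrite h (add_N h). Qed.

Lemma rinv_prod {A WS : pzRingType} {f : A -> WS} (hf : rmorph_prop f) (F : nat -> A)
  (hF : forall i, exists t, f (F i) * t = 1) n :
  exists t, f (\prod_(i < n) F i) * t = 1.
Proof.
case: hf => [_ [hm h1]].
elim: n => [|n [t ht]].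
  by exists 1; rewrite big_ord0 h1 mulr1.
have [t' ht'] := hF n.
exists (t' * t); rewrite big_ord_recr /= hm.
by rewrite -mulrA (mulrA (f (F n))) ht' mul1r ht.
Qed.

Theorem proposition2p4
  (k : fieldType) (A : pzRingType) (eta : k -> A) (hA : kalg_structure eta)
  (a : A) (ha : central a)
  (sigma sigma' : A -> A) (hsigma : kalg_aut eta sigma sigma')
  (W : pzRingType) (iota : A -> W) (x y : W) (hW : is_GWA a sigma iota x y)
  (WS : pzRingType) (phi : W -> WS)
  (hWS : is_localization
           (fun w => exists (n : int) (m : nat), w = iota (zpow_fun sigma sigma' n (a ^+ m)))
           phi)
  (V : zmodType) (actV : V -> W -> V) (hV : rmodule_prop actV)
  (VS : zmodType) (tauV : V -> WS -> VS) (actVS : VS -> WS -> VS)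
  (hVS : is_tensor phi actV tauV actVS)
  (Q : zmodType) (actQ : Q -> W -> Q) (pi : V -> Q)
  (hQ : is_quotient actV (Vheight iota a sigma' actV) actQ pi)
  (QS : zmodType) (tauQ : Q -> WS -> QS) (actQS : QS -> WS -> QS)
  (hQS : is_tensor phi actQ tauQ actQS) :
  exists f : VS -> QS,
    [/\ additive_prop f, bijective f &
      forall t s, f (actVS t s) = actQS (f t) s].
Proof.
case: hVS => hactVS [bV1 [bV2 bV3]] hVSact univV.
case: hQS => hactQS hbalQ hQSact univQ.
have [bQ1 [bQ2 bQ3]] := hbalQ.
case: hQ => _ hpiadd hpiact hpisurj hpiker.
case: hWS => [hphi [hinv _]].
case: hW => [hiota _].
have hpsi : rmorph_prop (fun u => phi (iota u)).
  case: hphi => [p1 [p2 p3]]; case: hiota => [i1 [i2 i3]].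
  by split; [move=> u v; rewrite i1 p1|split; [move=> u v; rewrite i2 p2|rewrite i3 p3]].
have kill : forall v s, Vheight iota a sigma' actV v -> tauV v s = 0.
  move=> v s hv.
  have [l hl] : exists l, Vlevel iota a sigma' actV l v.
    by case: hv => [[l [_ h]]|[_ [l h]]]; exists l.
  have hF : forall i, exists t, phi (iota (iter i sigma' a)) * t = 1.
    move=> i.
    have Pi : exists (n : int) (m : nat), iota (iter i sigma' a) = iota (zpow_fun sigma sigma' n (a ^+ m)).
      case: i => [|j]; [exists (Posz 0)|exists (Negz j)]; exists 1%N; by rewrite /= expr1.
    by have [t [ht _]] := hinv _ Pi; exists t.
  have [t ht] := rinv_prod hpsi (fun i => iter i sigma' a) hF l.+1.
  rewrite -[s]mul1r -ht -mulrA -bV3 hl.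
  by apply: (add_0 (f := fun v => tauV v (t * s))) => u w; rewrite bV1.
have wd : forall v v' s, pi v = pi v' -> tauV v s = tauV v' s.
  move=> v v' s e.
  have h0 : tauV (v - v') s = 0.
    by apply: kill; apply/hpiker; rewrite (add_B hpiadd) e subrr.
  by rewrite -[v](subrK v') bV1 h0 add0r.
have [rep hrep] : exists rep : Q -> V, forall q, pi (rep q) = q.
  exists (fun q => proj1_sig (constructive_indefinite_description _ (hpisurj q))).
  by move=> q; case: (constructive_indefinite_description _ _).
have balf : balanced phi actV (fun v s => tauQ (pi v) s).
  split; first by move=> v v' s; rewrite hpiadd bQ1.
  split; first by move=> v s s'; rewrite bQ2.
  by move=> v w s; rewrite hpiact bQ3.
have [f [fadd fgen funiq]] := univV QS _ balf.
have balg : balanced phi actQ (fun q s => tauV (rep q) s).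
  split.
    move=> q q' s; rewrite -bV1; apply: wd; by rewrite hpiadd !hrep.
  split; first by move=> q s s'; rewrite bV2.
  move=> q w s; rewrite -bV3; apply: wd; by rewrite hpiact !hrep.
have [g [gadd ggen guniq]] := univQ VS _ balg.
have fg : forall t, f (g t) = t.
  have [h [_ _ huniq]] := univQ QS _ hbalQ.
  move=> t; transitivity (h t); last (symmetry; apply: (huniq id) => //).
  apply: (huniq (fun t => f (g t))).
  - by move=> u v; rewrite gadd fadd.
  - by move=> q s; rewrite ggen fgen hrep.
have gf : forall t, g (f t) = t.
  have [h [_ _ huniq]] := univV VS _ (conj bV1 (conj bV2 bV3)).
  move=> t; transitivity (h t); last (symmetry; apply: (huniq id) => //).
  apply: (huniq (fun t => g (f t))).
  - by move=> u v; rewrite fadd gadd.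
  - by move=> v s; rewrite fgen ggen; apply: wd; rewrite hrep.
exists f; split => //; first by exists g.
move=> t s.
case: hactVS => [_ [_ [hV3 _]]]; case: hactQS => [_ [_ [hQ3 _]]].
have balc : balanced phi actV (fun v s0 => tauQ (pi v) (s0 * s)).
  split; first by move=> v v' s0; rewrite hpiadd bQ1.
  split; first by move=> v s0 s'; rewrite mulrDl bQ2.
  by move=> v w s0; rewrite hpiact bQ3 mulrA.
have [h [_ _ huniq]] := univV QS _ balc.
have e1 := huniq (fun t => f (actVS t s)).
have e2 := huniq (fun t => actQS (f t) s).
rewrite e1 ?e2 //.
- by move=> u v; rewrite fadd hQ3.
- by move=> v s0; rewrite fgen hQSact.
- by move=> u v; rewrite hV3 fadd.
- by move=> v s0; rewrite hVSact fgen.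
Qed.
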